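(* Fix an integer $d\ge 8$. The sequence $\psi^{(k)}(\mathbf{0})$, $k=0,1,2,\dots$, does not converge pointwise, where $\mathbf{0}=(0,0,\dots)$ and $\psi^{(k)}$ is the $k$-fold iterate of $\psi$.
   Context: For a probability distribution $z=(z_i)_{i\in\mathbb{Z}}$ on $\mathbb{Z}$ set $A(z)_i=(z_{i-1}+z_i+z_{i+1})^d$ and $F(z)=A(z)/\sum_{i}A(z)_i$. Let $\mathcal{E}$ be the set of symmetric ($z_i=z_{-i}$) probability distributions on $\mathbb{Z}$ whose support is an interval of $\mathbb{Z}$ or all of $\mathbb{Z}$. Define $\mathsf R\colon\mathcal{E}\to[0,\infty)^{\{1,2,\dots\}}$ by $\mathsf R(z)_i=z_i/z_{i-1}$ if $z_{i-1}\ne0$ and $0$ otherwise; $\mathsf R$ is injective on $\mathcal{E}$, $\mathcal{R}:=\mathsf R(\mathcal{E})$, and $\psi:=\mathsf R\circ F\circ\mathsf R^{-1}\colon\mathcal{R}\to\mathcal{R}$. Explicitly $\psi(x)_1=\big(\frac{1+x_1+x_1x_2}{1+2x_1}\big)^d$ and $\psi(x)_n=x_{n-1}^d\big(\frac{1+x_n+x_nx_{n+1}}{1+x_{n-1}+x_{n-1}x_n}\big)^d$ for $n\ge2$. Note $\mathbf 0=\mathsf R(\delta_0)\in\mathcal{R}$. *)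

(* Defs.v *)
From Stdlib Require Import Reals.
Open Scope R_scope.

(* Sequences x = (x_1, x_2, ...) in [0,oo)^{1,2,...} are represented as
   functions nat -> R; index 0 is unused (psi sets it to 0). *)
Definition psi (d : nat) (x : nat -> R) (n : nat) : R :=
  match n with
  | O => 0
  | S O => ((1 + x 1%nat + x 1%nat * x 2%nat) / (1 + 2 * x 1%nat)) ^ d
  | S (S m) =>
      let n := S (S m) in
      (x (S m)) ^ d *
      ((1 + x n + x n * x (S n)) / (1 + x (S m) + x (S m) * x n)) ^ d
  end.

Definition zero_seq : nat -> R := fun _ => 0.

Definition psi_iter (d k : nat) (x : nat -> R) : nat -> R :=
  Nat.iter k (psi d) x.

(* Main.v *)
Require Import Defs.
From Stdlib Require Import Reals.
From Stdlib Require Import Lra Lia.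
Open Scope R_scope.

Definition Inv0 (x : nat -> R) := forall n, 0 <= x n <= 1.

Lemma qle (u v p q : R) : 0 < v -> 0 < q -> u * q <= p * v -> u / v <= p / q.
Proof.
  intros Hv Hq H.
  assert (E1 : u / v = (u * q) * / (v * q)) by (field; lra).
  assert (E2 : p / q = (p * v) * / (v * q)) by (field; lra).
  rewrite E1, E2. apply Rmult_le_compat_r; [|exact H].
  apply Rlt_le, Rinv_0_lt_compat; nra.
Qed.

Lemma div_bounds (u v : R) : 0 < v -> 0 <= u -> u <= v -> 0 <= u / v <= 1.
Proof.
  intros Hv Hu Huv. split.
  - apply Rmult_le_pos; [lra|]. apply Rlt_le, Rinv_0_lt_compat; lra.
  - replace 1 with (1/1) by field. apply qle; lra.
Qed.

Lemma pow01 (a : R) (d : nat) : 0 <= a <= 1 -> 0 <= a ^ d <= 1.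
Proof.
  intros H. split. apply pow_le; lra.
  rewrite <- (pow1 d). apply pow_incr. lra.
Qed.

Lemma psi_S (d : nat) (x : nat -> R) (m : nat) :
  psi d x (S (S m)) = (x (S m) * ((1 + x (S (S m)) + x (S (S m)) * x (S (S (S m))))
       / (1 + x (S m) + x (S m) * x (S (S m))))) ^ d.
Proof. simpl. rewrite Rpow_mult_distr. reflexivity. Qed.

Lemma inv_pres (d : nat) (x : nat -> R) : Inv0 x -> Inv0 (psi d x).
Proof.
  intros H n. destruct n as [|[|m]].
  - simpl. lra.
  - simpl psi. apply pow01. destruct (H 1%nat), (H 2%nat).
    apply div_bounds; nra.
  - rewrite psi_S. apply pow01.
    destruct (H (S m)) as [a1 a2], (H (S (S m))) as [b1 b2], (H (S (S (S m)))) as [c1 c2].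
    set (a := x (S m)) in *. set (b := x (S (S m))) in *. set (c := x (S (S (S m)))) in *.
    replace (a * ((1 + b + b * c) / (1 + a + a * b))) with
      ((a * (1 + b + b * c)) / (1 + a + a * b)) by (field; nra).
    assert (b * c <= 1 * 1) by (apply Rmult_le_compat; lra).
    assert (a * (b * c) <= 1 * 1) by (apply Rmult_le_compat; nra).
    assert (0 <= a * b) by (apply Rmult_le_pos; lra).
    assert (0 <= b * c) by (apply Rmult_le_pos; lra).
    assert (0 <= a * (b * c)) by (apply Rmult_le_pos; lra).
    apply div_bounds.
    + lra.
    + replace (a * (1 + b + b * c)) with (a + a * b + a * (b * c)) by ring. lra.
    + replace (a * (1 + b + b * c)) with (a + a * b + a * (b * c)) by ring. lra.
Qed.

Section Params.
Variables (d : nat) (e b dl : R).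
Hypothesis he : 0 < e.
Hypothesis hb : 0 < b.
Hypothesis hdl : 0 <= dl < 1.
Hypothesis h2 : b <= ((1 + e) / (1 + 2 * e)) ^ d.
Hypothesis h3 : (3 * e) ^ d <= dl.
Hypothesis h4 : ((1 + b * (1 + dl)) / (1 + 2 * b)) ^ d <= e.

Definition SA (x : nat -> R) := Inv0 x /\ x 1%nat <= e.
Definition SB (x : nat -> R) := Inv0 x /\ b <= x 1%nat /\ x 2%nat <= dl.

Lemma AB x : SA x -> SB (psi d x).
Proof.
  intros [H H1]. split; [apply inv_pres; exact H|].
  destruct (H 1%nat), (H 2%nat), (H 3%nat).
  assert (0 <= x 1%nat * x 2%nat) by (apply Rmult_le_pos; lra).
  assert (0 <= x 2%nat * x 3%nat) by (apply Rmult_le_pos; lra).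
  assert (0 <= e * (x 1%nat * x 2%nat)) by (apply Rmult_le_pos; lra).
  split.
  - eapply Rle_trans; [exact h2|]. simpl psi. apply pow_incr. split.
    + apply Rmult_le_pos; [lra|]. apply Rlt_le, Rinv_0_lt_compat; lra.
    + apply qle; try lra; nra.
  - change 2%nat with (S (S O)). rewrite psi_S.
    eapply Rle_trans; [|exact h3]. apply pow_incr. split.
    + apply Rmult_le_pos; [lra|]. apply Rmult_le_pos; [nra|].
      apply Rlt_le, Rinv_0_lt_compat; nra.
    + replace (x 1%nat * ((1 + x 2%nat + x 2%nat * x 3%nat) / (1 + x 1%nat + x 1%nat * x 2%nat)))
        with ((x 1%nat * (1 + x 2%nat + x 2%nat * x 3%nat)) / (1 + x 1%nat + x 1%nat * x 2%nat)) by (field; nra).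
      replace (3 * e) with ((3 * e) / 1) by field.
      assert (x 2%nat * x 3%nat <= 1 * 1) by (apply Rmult_le_compat; lra).
      assert (0 <= x 1%nat * (x 2%nat * x 3%nat)) by (apply Rmult_le_pos; lra).
      apply qle; try lra; nra.
Qed.

Lemma BA x : SB x -> SA (psi d x).
Proof.
  intros [H [H1 H2]]. split; [apply inv_pres; exact H|].
  destruct (H 1%nat), (H 2%nat).
  eapply Rle_trans; [|exact h4]. simpl psi. apply pow_incr. split.
  + apply Rmult_le_pos; [nra|]. apply Rlt_le, Rinv_0_lt_compat; lra.
  + apply qle; try nra.
    set (u := x 1%nat) in *. set (w := x 2%nat) in *.
    assert (u * w <= u * dl) by nra.
    assert ((u - b) * (dl - 1) <= 0) by nra. nra.
Qed.

Lemma zero_inv : Inv0 zero_seq.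
Proof. intros n. unfold zero_seq. lra. Qed.

Lemma iter_S k x : psi_iter d (S k) x = psi d (psi_iter d k x).
Proof. reflexivity. Qed.

Lemma orbit k : SA (psi_iter d (2 * k) zero_seq) /\ SB (psi_iter d (S (2 * k)) zero_seq).
Proof.
  induction k as [|k [IA IB]].
  - assert (SA zero_seq) by (split; [apply zero_inv | unfold zero_seq; lra]).
    split; [exact H|]. simpl Nat.mul. rewrite iter_S. apply AB; exact H.
  - replace (2 * S k)%nat with (S (S (2 * k))) by lia.
    assert (SA (psi_iter d (S (S (2 * k))) zero_seq)) by (rewrite iter_S; apply BA; exact IB).
    split; [exact H|]. rewrite iter_S. apply AB; exact H.
Qed.

Lemma nonconv : e < b ->
  ~ (forall n : nat, (1 <= n)%nat ->
       exists l : R, Un_cv (fun k : nat => psi_iter d k zero_seq n) l).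
Proof.
  intros heb Hc. destruct (Hc 1%nat (le_n 1)) as [l Hl].
  destruct (Hl ((b - e) / 2)) as [N HN]; [lra|].
  assert (Ha := HN (2 * N)%nat ltac:(lia)).
  assert (Hb := HN (S (2 * N))%nat ltac:(lia)).
  destruct (orbit N) as [[_ A1] [_ [B1 _]]].
  unfold R_dist in *. apply Rabs_def2 in Ha. apply Rabs_def2 in Hb. lra.
Qed.
End Params.

Lemma expn (c : R) (n : nat) : exp c ^ n = exp (INR n * c).
Proof.
  induction n. simpl. rewrite Rmult_0_l, exp_0. reflexivity.
  rewrite S_INR. simpl. rewrite IHn, <- exp_plus. f_equal. ring.
Qed.

Lemma big_b (d : nat) : (1 <= d)%nat -> 1/3 <= ((1 + 1 / INR d) / (1 + 2 * (1 / INR d))) ^ d.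
Proof.
  intros Hd. assert (HD : 1 <= INR d) by (assert (INR 1 <= INR d) by (apply le_INR; lia); simpl in *; lra).
  replace ((1 + 1 / INR d) / (1 + 2 * (1 / INR d))) with (/ (1 + 1 / (INR d + 1))) by (field; lra).
  rewrite pow_inv.
  assert (Hp : 0 < (1 + 1 / (INR d + 1)) ^ d) by (apply pow_lt; apply Rplus_lt_le_0_compat; [lra|];
     apply Rlt_le, Rdiv_lt_0_compat; lra).
  assert (Hle : (1 + 1 / (INR d + 1)) ^ d <= 3).
  { eapply Rle_trans. apply pow_incr. split. apply Rplus_le_le_0_compat; [lra|].
      apply Rlt_le, Rdiv_lt_0_compat; lra.
    apply exp_ineq1_le. rewrite expn.
    eapply Rle_trans; [|apply exp_le_3].
    destruct (Req_dec (INR d * (1 / (INR d + 1))) 1) as [E|E]; [rewrite E; lra|].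
    apply Rlt_le, exp_increasing.
    replace (INR d * (1 / (INR d + 1))) with (1 - 1/(INR d + 1)) by (field; lra).
    assert (0 < 1 / (INR d + 1)) by (apply Rdiv_lt_0_compat; lra). lra. }
  replace (1/3) with (/3) by field. apply Rinv_le_contravar; lra.
Qed.

Lemma dpow (d : nat) : (12 <= d)%nat -> INR d * (81/100) ^ d <= 1.
Proof.
  intros H. induction H.
  - simpl. lra.
  - rewrite S_INR. simpl. assert (12 <= INR m) by (assert (INR 12 <= INR m) by (apply le_INR; lia); simpl in *; lra).
    assert (0 <= (81/100)^m) by (apply pow_le; lra). nra.
Qed.

Theorem theorem2p5 (d : nat) (hd : (8 <= d)%nat) :
  ~ (forall n : nat, (1 <= n)%nat ->
       exists l : R, Un_cv (fun k : nat => psi_iter d k zero_seq n) l).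
Proof.
  destruct (Nat.le_gt_cases 12 d) as [H12|Hs].
  - assert (HD : 12 <= INR d) by (assert (INR 12 <= INR d) by (apply le_INR; lia); simpl in *; lra).
    assert (Hpe : 0 < 1 / INR d) by (apply Rdiv_lt_0_compat; lra).
    apply (nonconv d (1 / INR d) (1/3) (1/1000)); try lra.
    + apply big_b; lia.
    + eapply Rle_trans. apply pow_incr. split; [lra|].
      assert (3 * (1 / INR d) <= 1/4).
      { replace (3 * (1 / INR d)) with (3 / INR d) by (field; lra).
        replace (1/4) with (3/12) by field. apply qle; lra. }
      exact H.
      replace d with (5 + (d - 5))%nat by lia. rewrite pow_add.
      assert (0 <= (1/4)^(d-5) <= 1) by (apply pow01; lra).
      simpl. nra.
    + eapply Rle_trans. apply pow_incr. split.
      apply Rlt_le, Rdiv_lt_0_compat; lra.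
      assert (H : (1 + 1 / 3 * (1 + 1 / 1000)) / (1 + 2 * (1 / 3)) <= 81/100)
        by (apply Rle_trans with ((1 + 1 / 3 * (1 + 1 / 1000)) * / (1 + 2 * (1 / 3))); [lra|]; lra).
      exact H.
      assert (Hx := dpow d H12).
      replace (1 / INR d) with (/ INR d) by (field; lra).
      apply (Rmult_le_reg_l (INR d)); [lra|]. rewrite Rinv_r by lra. exact Hx.
    + assert (1 / INR d <= 1/12) by (apply qle; lra). lra.
  - assert (d = 8 \/ d = 9 \/ d = 10 \/ d = 11)%nat as [E|[E|[E|E]]] by lia; subst d.
    + apply (nonconv 8 (1/8) (43/100) (1/1000)); simpl; lra.
    + apply (nonconv 9 (1/9) (2/5) (1/1000)); simpl; lra.
    + apply (nonconv 10 (1/10) (2/5) (1/1000)); simpl; lra.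
    + apply (nonconv 11 (1/11) (2/5) (1/1000)); simpl; lra.
Qed.
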